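(* Let $a\in V$. For all $n\ge 2$ and all $t\in(\Sigma^{\mathrm{CoR}}_{n})_{\le 1}$, there exist $t_0\in(\Sigma^{\mathrm{CoR}}_{1})_{\le 1}$ and $t_1\in(\Pi^{\mathrm{CoR}}_{n-1})_{\le 1}$ such that $t\sim_{\mathrm{REL}_{\ge 3}} t_0[t_1/a]$.
   Context: Fix a non-empty finite set $V$ of variables. CoR terms are generated by $t ::= a \mid \bot \mid \top \mid t \cup t \mid t \cap t \mid t^{-} \mid \mathrm{I} \mid \mathrm{D} \mid t \cdot t \mid t \dagger t \mid t^{\pi}$, where $a \in V$ and $\pi$ ranges over all maps $\{1,2\}\to\{1,2\}$. A structure $M$ consists of a non-empty set $|M|$ and a binary relation $a^M\subseteq|M|^2$ for each $a\in V$. The interpretation $[\![t]\!]_M\subseteq|M|^2$: $[\![a]\!]_M=a^M$, $[\![\bot]\!]_M=\emptyset$, $[\![\top]\!]_M=|M|^2$, $\cup,\cap$ set-theoretic, $[\![t^-]\!]_M=|M|^2\setminus[\![t]\!]_M$, $[\![\mathrm{I}]\!]_M=\{(x,y):x=y\}$, $[\![\mathrm{D}]\!]_M=\{(x,y):x\ne y\}$, $R\cdot S=\{(x,y):\exists z,(x,z)\in R\wedge(z,y)\in S\}$, $R\dagger S=\{(x,y):\forall z,(x,z)\in R\vee(z,y)\in S\}$, $R^{\pi}=\{(x_1,x_2):(x_{\pi(1)},x_{\pi(2)})\in R\}$. $\mathrm{REL}_{\ge 3}$ is the class of structures with at least $3$ elements; $t\sim_{\mathrm{REL}_{\ge 3}}s$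 iff $[\![t]\!]_M=[\![s]\!]_M$ for all $M\in\mathrm{REL}_{\ge 3}$. $\mathrm{vo}(t)$ is the number of occurrences of variables in $t$, $S_{\le k}=\{t\in S:\mathrm{vo}(t)\le k\}$, and $t[s/a]$ is $t$ with each occurrence of $a$ replaced by $s$. The dot-dagger alternation hierarchy: $\Sigma^{\mathrm{CoR}}_n,\Pi^{\mathrm{CoR}}_n$ are the least sets such that $\Sigma^{\mathrm{CoR}}_0=\Pi^{\mathrm{CoR}}_0$ is the set of terms containing neither $\cdot$ nor $\dagger$; $\Sigma^{\mathrm{CoR}}_n\cup\Pi^{\mathrm{CoR}}_n\subseteq\Sigma^{\mathrm{CoR}}_{n+1}\cap\Pi^{\mathrm{CoR}}_{n+1}$; for $n\ge1$, if $s,u\in\Sigma^{\mathrm{CoR}}_n$ then $s\cup u,s\cap u,s\cdot u,s^{\pi}\in\Sigma^{\mathrm{CoR}}_n$ and $s\dagger u\in\Pi^{\mathrm{CoR}}_{n+1}$; for $n\ge1$, if $s,u\in\Pi^{\mathrm{CoR}}_n$ then $s\cup u,s\cap u,s\dagger u,s^{\pi}\in\Pi^{\mathrm{CoR}}_n$ and $s\cdot u\in\Sigma^{\mathrm{CoR}}_{n+1}$. *)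

(* Defs.v *)
From mathcomp Require Import all_boot.
Set Implicit Arguments. Unset Strict Implicit. Unset Printing Implicit Defensive.

Section CoR.
Variable V : finType.

(* Maps pi : {1,2} -> {1,2} are represented as functions 'I_2 -> 'I_2,
   with ord0 standing for 1 and the other ordinal for 2. *)
Inductive term : Type :=
| tVar of V
| tBot | tTop
| tCup of term & term
| tCap of term & term
| tCompl of term
| tI | tD
| tComp of term & term
| tDag of term & term
| tPerm of term & ('I_2 -> 'I_2).

(* a structure: carrier M (non-emptiness is implied by having 3 elements
   in REL_{>=3}) and an interpretation of the variables *)
Definition pick2 (M : Type) (i : 'I_2) (x1 x2 : M) : M :=
  if nat_of_ord i == 0 then x1 else x2.

Fixpoint sem (M : Type) (I : V -> M -> M -> Prop) (t : term) : M -> M -> Prop :=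
  match t with
  | tVar a => I a
  | tBot => fun _ _ => False
  | tTop => fun _ _ => True
  | tCup t1 t2 => fun x y => sem I t1 x y \/ sem I t2 x y
  | tCap t1 t2 => fun x y => sem I t1 x y /\ sem I t2 x y
  | tCompl t1 => fun x y => ~ sem I t1 x y
  | tI => fun x y => x = y
  | tD => fun x y => x <> y
  | tComp t1 t2 => fun x y => exists z, sem I t1 x z /\ sem I t2 z y
  | tDag t1 t2 => fun x y => forall z, sem I t1 x z \/ sem I t2 z y
  | tPerm t1 p => fun x1 x2 => sem I t1 (pick2 (p ord0) x1 x2) (pick2 (p ord_max) x1 x2)
  end.

Definition atleast3 (M : Type) : Prop :=
  exists x y z : M, x <> y /\ y <> z /\ x <> z.

Definition equiv_REL3 (t s : term) : Prop :=
  forall (M : Type) (I : V -> M -> M -> Prop), atleast3 M ->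
    forall x y, sem I t x y <-> sem I s x y.

Fixpoint vo (t : term) : nat :=
  match t with
  | tVar _ => 1
  | tBot | tTop | tI | tD => 0
  | tCup t1 t2 | tCap t1 t2 | tComp t1 t2 | tDag t1 t2 => vo t1 + vo t2
  | tCompl t1 | tPerm t1 _ => vo t1
  end.

Fixpoint subst (t : term) (a : V) (s : term) : term :=
  match t with
  | tVar b => if b == a then s else tVar b
  | tBot => tBot | tTop => tTop | tI => tI | tD => tD
  | tCup t1 t2 => tCup (subst t1 a s) (subst t2 a s)
  | tCap t1 t2 => tCap (subst t1 a s) (subst t2 a s)
  | tComp t1 t2 => tComp (subst t1 a s) (subst t2 a s)
  | tDag t1 t2 => tDag (subst t1 a s) (subst t2 a s)
  | tCompl t1 => tCompl (subst t1 a s)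
  | tPerm t1 p => tPerm (subst t1 a s) p
  end.

Fixpoint no_comp (t : term) : Prop :=
  match t with
  | tVar _ | tBot | tTop | tI | tD => True
  | tCup t1 t2 | tCap t1 t2 => no_comp t1 /\ no_comp t2
  | tComp _ _ | tDag _ _ => False
  | tCompl t1 | tPerm t1 _ => no_comp t1
  end.

Inductive Sigma : nat -> term -> Prop :=
| Sigma0 t : no_comp t -> Sigma 0 t
| SigmaS_S n t : Sigma n t -> Sigma n.+1 t
| SigmaS_P n t : Pi n t -> Sigma n.+1 t
| SigmaCup n s u : 1 <= n -> Sigma n s -> Sigma n u -> Sigma n (tCup s u)
| SigmaCap n s u : 1 <= n -> Sigma n s -> Sigma n u -> Sigma n (tCap s u)
| SigmaComp n s u : 1 <= n -> Sigma n s -> Sigma n u -> Sigma n (tComp s u)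
| SigmaPerm n s p : 1 <= n -> Sigma n s -> Sigma n (tPerm s p)
| SigmaPiComp n s u : 1 <= n -> Pi n s -> Pi n u -> Sigma n.+1 (tComp s u)
with Pi : nat -> term -> Prop :=
| Pi0 t : no_comp t -> Pi 0 t
| PiS_S n t : Sigma n t -> Pi n.+1 t
| PiS_P n t : Pi n t -> Pi n.+1 t
| PiCup n s u : 1 <= n -> Pi n s -> Pi n u -> Pi n (tCup s u)
| PiCap n s u : 1 <= n -> Pi n s -> Pi n u -> Pi n (tCap s u)
| PiDag n s u : 1 <= n -> Pi n s -> Pi n u -> Pi n (tDag s u)
| PiPerm n s p : 1 <= n -> Pi n s -> Pi n (tPerm s p)
| PiSigmaDag n s u : 1 <= n -> Sigma n s -> Sigma n u -> Pi n.+1 (tDag s u).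

End CoR.

(* Main.v *)
Require Import Defs.
From mathcomp Require Import all_boot.
From mathcomp Require Import zify.
From Stdlib Require Import Classical.

Section Aux.
Variable V : finType.

Definition bp (b : bool) : Prop := if b then True else False.
Definition Rb (M : Type) (b1 b2 : bool) (x y : M) : Prop :=
  (x = y /\ bp b1) \/ (x <> y /\ bp b2).
Arguments Rb {M}.

Lemma third (M : Type) : atleast3 M -> forall x y : M, exists z, z <> x /\ z <> y.
Proof.
move=> [x0 [y0 [z0 [h1 [h2 h3]]]]] x y.
destruct (classic (x0 = x)); destruct (classic (x0 = y)); subst.
- by exists y0; split => // E; apply h1.
- destruct (classic (y0 = y)); subst.
  + by exists z0; split=> E; subst; auto.
  + by exists y0; split=> E; subst; auto.
- destruct (classic (y0 = x)); subst.
  + by exists z0; split=> E; subst; auto.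
  + by exists y0; split=> E; subst; auto.
- by exists x0.
Qed.

Arguments third {M}.

Definition cst (b1 b2 : bool) : term V :=
  if b1 then (if b2 then tTop V else tI V) else (if b2 then tD V else tBot V).

Lemma sem_cst M (I : V -> M -> M -> Prop) b1 b2 x y :
  sem I (cst b1 b2) x y <-> Rb b1 b2 x y.
Proof.
rewrite /Rb; case: b1; case: b2 => /=; split => H;
  destruct (classic (x = y)); subst; try tauto; firstorder.
all: by [].
Qed.

Lemma vo_cst b1 b2 : vo (cst b1 b2) = 0.
Proof. by case: b1; case: b2. Qed.

Lemma subst_cst b1 b2 a s : subst (cst b1 b2) a s = cst b1 b2.
Proof. by case: b1; case: b2. Qed.

Lemma no_comp_cst b1 b2 : no_comp (cst b1 b2).
Proof. by case: b1; case: b2. Qed.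

Definition CS (t : term V) b1 b2 :=
  forall M (I : V -> M -> M -> Prop), atleast3 M ->
    forall x y, sem I t x y <-> Rb b1 b2 x y.

Ltac T := cbv [bp] in *; intuition (subst; congruence).

Lemma closed_const t : vo t = 0 -> exists b1 b2, CS t b1 b2.
Proof.
rewrite /CS /Rb.
elim: t => /=.
- by [].
- move=> _; exists false, false => M I _ x y; split; [by []|by move=> [[]|[]]].
- move=> _; exists true, true => M I _ x y; split => // _.
  destruct (classic (x = y)); T.
- move=> s IHs u IHu H.
  have [H1 H2] : vo s = 0 /\ vo u = 0 by lia.
  case: (IHs H1) => b1 [b2 Hs]; case: (IHu H2) => c1 [c2 Hu].
  exists (b1 || c1), (b2 || c2) => M I H3 x y.
  rewrite (Hs M I H3 x y) (Hu M I H3 x y); clear Hs Hu.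
  case: b1; case: b2; case: c1; case: c2 => /=; T.
- move=> s IHs u IHu H.
  have [H1 H2] : vo s = 0 /\ vo u = 0 by lia.
  case: (IHs H1) => b1 [b2 Hs]; case: (IHu H2) => c1 [c2 Hu].
  exists (b1 && c1), (b2 && c2) => M I H3 x y.
  rewrite (Hs M I H3 x y) (Hu M I H3 x y); clear Hs Hu.
  case: b1; case: b2; case: c1; case: c2 => /=; T.
- move=> s IHs H.
  case: (IHs H) => b1 [b2 Hs].
  exists (~~ b1), (~~ b2) => M I H3 x y.
  rewrite (Hs M I H3 x y); clear Hs.
  destruct (classic (x = y)); case: b1; case: b2 => /=; T.
- move=> _; exists true, false => M I _ x y; split; first T.
  by move=> [[]|[]].
- move=> _; exists false, true => M I _ x y; split; first T.
  by move=> [[]|[]].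
- move=> s IHs u IHu H.
  have [H1 H2] : vo s = 0 /\ vo u = 0 by lia.
  case: (IHs H1) => b1 [b2 Hs]; case: (IHu H2) => c1 [c2 Hu].
  exists ((b1 && c1) || (b2 && c2)), [|| b1 && c2, b2 && c1 | b2 && c2] => M I H3 x y.
  move: (Hs M I H3) (Hu M I H3) => {Hs Hu} Hs Hu.
  have [z [zx zy]] := third H3 x y.
  split.
  + move=> [w [Hw1 Hw2]].
    move: Hw1 Hw2; rewrite Hs Hu.
    destruct (classic (x = y)); destruct (classic (x = w)); destruct (classic (w = y));
      subst; case: b1 Hs; case: b2; case: c1 Hu; case: c2 => /=; T.
  + move=> Hr; destruct (classic (x = y)); subst;
    case: b1 Hs Hr; case: b2; case: c1 Hu; case: c2 => Hu Hs Hr /=;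
    first [T | (exists x; rewrite Hs Hu; T) | (exists y; rewrite Hs Hu; T)
          | (exists z; rewrite Hs Hu; T)].
- move=> s IHs u IHu H.
  have [H1 H2] : vo s = 0 /\ vo u = 0 by lia.
  case: (IHs H1) => b1 [b2 Hs]; case: (IHu H2) => c1 [c2 Hu].
  exists ((b1 || c1) && (b2 || c2)), [&& b1 || c2, b2 || c1 & b2 || c2] => M I H3 x y.
  move: (Hs M I H3) (Hu M I H3) => {Hs Hu} Hs Hu.
  have [z [zx zy]] := third H3 x y.
  split.
  + move=> Hall.
    have := Hall x; have := Hall y; have := Hall z; rewrite !Hs !Hu => A B C.
    destruct (classic (x = y)); subst;
    case: b1 Hs A B C; case: b2; case: c1 Hu; case: c2 => Hu Hs A B C /=; T.
  + move=> Hr w.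
    rewrite Hs Hu.
    destruct (classic (x = y)); destruct (classic (x = w)); destruct (classic (w = y));
      subst; case: b1 Hs Hr; case: b2; case: c1 Hu; case: c2 => /=; T.
- move=> s IHs p H.
  case: (IHs H) => b1 [b2 Hs].
  exists b1, (if nat_of_ord (p ord0) == nat_of_ord (p ord_max) then b1 else b2)
    => M I H3 x y.
  rewrite (Hs M I H3).
  rewrite /pick2.
  case: (p ord0) => [[|[|k]] Hk]; case: (p ord_max) => [[|[|k']] Hk'] //=;
    destruct (classic (x = y)); subst; try T;
    try (case: b1 Hs; case: b2 => /= Hs; try T;
       split; try T; move=> [[E _]|[E _]]; try T; by apply: False_ind; auto).
Qed.

End Aux.

Section Main.
Variable V : finType.
Implicit Types t s u : term V.

Lemma closed_eqv t : vo t = 0 -> exists b1 b2, equiv_REL3 t (cst V b1 b2).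
Proof.
move=> /closed_const [b1 [b2 H]]; exists b1, b2 => M I H3 x y.
by rewrite (H M I H3) sem_cst.
Qed.

Lemma subst_var t a : subst t a (tVar a) = t.
Proof.
elim: t => //=; try by move=> ? -> ? ->.
- by move=> b; case: eqP => // ->.
- by move=> ? ->.
- by move=> ? -> p.
Qed.

Lemma eqv_refl t : equiv_REL3 t t.
Proof. by []. Qed.

Lemma eqv_cup s s' u u' : equiv_REL3 s s' -> equiv_REL3 u u' ->
  equiv_REL3 (tCup s u) (tCup s' u').
Proof. move=> Hs Hu M I H x y /=; rewrite Hs // Hu //. Qed.
Lemma eqv_cap s s' u u' : equiv_REL3 s s' -> equiv_REL3 u u' ->
  equiv_REL3 (tCap s u) (tCap s' u').
Proof. move=> Hs Hu M I H x y /=; rewrite Hs // Hu //. Qed.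
Lemma eqv_comp s s' u u' : equiv_REL3 s s' -> equiv_REL3 u u' ->
  equiv_REL3 (tComp s u) (tComp s' u').
Proof.
move=> Hs Hu M I H x y /=; split => -[z [A B]]; exists z.
- by rewrite -Hs // -Hu.
- by rewrite Hs // Hu.
Qed.
Lemma eqv_perm s s' p : equiv_REL3 s s' -> equiv_REL3 (tPerm s p) (tPerm s' p).
Proof. by move=> Hs M I H x y /=; rewrite Hs. Qed.

Lemma sig1_nc t : no_comp t -> Sigma 1 t.
Proof. by move=> H; apply: SigmaS_S; apply: Sigma0. Qed.

Lemma sig1_cst b1 b2 : Sigma 1 (cst V b1 b2).
Proof. apply: sig1_nc; exact: no_comp_cst. Qed.

Lemma vo_split s u : vo s + vo u <= 1 ->
  (vo u = 0 /\ vo s <= 1) \/ (vo s = 0 /\ vo u <= 1).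
Proof. move=> H; lia. Qed.

Definition Goal a n t := exists (t0 t1 : term V),
    (Sigma 1 t0 /\ vo t0 <= 1) /\ (Pi (n - 1) t1 /\ vo t1 <= 1) /\
    equiv_REL3 t (subst t0 a t1).

Lemma main a n t : Sigma n t -> 2 <= n -> vo t <= 1 -> Goal a n t.
Proof.
rewrite /Goal.
elim => {n t}.
- by [].
- move=> m t Hs IH Hm Hv.
  case: (ltnP 1 m) => Hm2.
  + have [t0 [t1 [[A B] [[C D] E]]]] := IH Hm2 Hv.
    exists t0, t1; split => //; split => //; split => //.
    rewrite subn1 /=; move: C; case: m Hm Hs IH Hm2 => // m' _ _ _ _.
    rewrite subn1 /= => C; exact: PiS_P.
  + have E1 : m = 1 by lia.
    subst m.
    exists t, (tVar a); split => //; split; last by rewrite subst_var.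
    split => //; apply: PiS_P; exact: Pi0.
- move=> m t Hp Hm Hv.
  exists (tVar a), t; split; first by split => //; apply: sig1_nc.
  by rewrite subn1 /= eqxx.
- move=> n s u Hn Hs IHs Hu IHu Hn2 /= /vo_split [[H1 H2]|[H1 H2]].
  + have [b1 [b2 E]] := closed_eqv _ H1.
    have [t0 [t1 [[A B] [[C D] F]]]] := IHs Hn2 H2.
    exists (tCup t0 (cst V b1 b2)), t1; split.
      split; [apply: SigmaCup => //; exact: sig1_cst|by rewrite /= vo_cst addn0].
    split => //=; rewrite subst_cst; exact: eqv_cup.
  + have [b1 [b2 E]] := closed_eqv _ H1.
    have [t0 [t1 [[A B] [[C D] F]]]] := IHu Hn2 H2.
    exists (tCup (cst V b1 b2) t0), t1; split.
      split; [apply: SigmaCup => //; exact: sig1_cst|by rewrite /= vo_cst].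
    split => //=; rewrite subst_cst; exact: eqv_cup.
- move=> n s u Hn Hs IHs Hu IHu Hn2 /= /vo_split [[H1 H2]|[H1 H2]].
  + have [b1 [b2 E]] := closed_eqv _ H1.
    have [t0 [t1 [[A B] [[C D] F]]]] := IHs Hn2 H2.
    exists (tCap t0 (cst V b1 b2)), t1; split.
      split; [apply: SigmaCap => //; exact: sig1_cst|by rewrite /= vo_cst addn0].
    split => //=; rewrite subst_cst; exact: eqv_cap.
  + have [b1 [b2 E]] := closed_eqv _ H1.
    have [t0 [t1 [[A B] [[C D] F]]]] := IHu Hn2 H2.
    exists (tCap (cst V b1 b2) t0), t1; split.
      split; [apply: SigmaCap => //; exact: sig1_cst|by rewrite /= vo_cst].
    split => //=; rewrite subst_cst; exact: eqv_cap.
- move=> n s u Hn Hs IHs Hu IHu Hn2 /= /vo_split [[H1 H2]|[H1 H2]].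
  + have [b1 [b2 E]] := closed_eqv _ H1.
    have [t0 [t1 [[A B] [[C D] F]]]] := IHs Hn2 H2.
    exists (tComp t0 (cst V b1 b2)), t1; split.
      split; [apply: SigmaComp => //; exact: sig1_cst|by rewrite /= vo_cst addn0].
    split => //=; rewrite subst_cst; exact: eqv_comp.
  + have [b1 [b2 E]] := closed_eqv _ H1.
    have [t0 [t1 [[A B] [[C D] F]]]] := IHu Hn2 H2.
    exists (tComp (cst V b1 b2) t0), t1; split.
      split; [apply: SigmaComp => //; exact: sig1_cst|by rewrite /= vo_cst].
    split => //=; rewrite subst_cst; exact: eqv_comp.
- move=> n s p Hn Hs IHs Hn2 /= Hv.
  have [t0 [t1 [[A B] [[C D] F]]]] := IHs Hn2 Hv.
  exists (tPerm t0 p), t1; split; first by split => //; apply: SigmaPerm.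
  split => //=; exact: eqv_perm.
- move=> m s u Hm Ps Pu Hm2 /= /vo_split [[H1 H2]|[H1 H2]].
  + have [b1 [b2 E]] := closed_eqv _ H1.
    exists (tComp (tVar a) (cst V b1 b2)), s; split.
      split; [apply: SigmaComp => //; [exact: sig1_nc|exact: sig1_cst]|by rewrite /= vo_cst].
    rewrite subn1 /= subst_cst eqxx; split => //; exact: eqv_comp.
  + have [b1 [b2 E]] := closed_eqv _ H1.
    exists (tComp (cst V b1 b2) (tVar a)), u; split.
      split; [apply: SigmaComp => //; [exact: sig1_cst|exact: sig1_nc]|by rewrite /= vo_cst].
    rewrite subn1 /= subst_cst eqxx; split => //; exact: eqv_comp.
Qed.

End Main.

Theorem lemma4p7 (V : finType) (a : V) :
  forall (n : nat), 2 <= n ->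
  forall t : term V, Sigma n t -> vo t <= 1 ->
  exists (t0 t1 : term V),
    (Sigma 1 t0 /\ vo t0 <= 1) /\ (Pi (n - 1) t1 /\ vo t1 <= 1) /\
    equiv_REL3 t (subst t0 a t1).
Proof.
move=> n Hn t Hs Hv; exact: (@main V a n t Hs Hn Hv).
Qed.
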